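(* Let $r\ge 2$ and $m\ge 7$ be integers. Then for every integer $n\ge m-1$, $$F_{n+2^{m-6},r}\equiv F_{n,r}\pmod{2^m},$$ i.e. from the term of index $m-1$ onward the sequence $(F_{n,r}\bmod 2^m)_{n\ge0}$ is periodic with period $2^{m-6}$.
   Context: For positive integers $r\le m\le n$, $S_r(n,m)$ denotes the $r$-Stirling number of the second kind: the number of partitions of $\{1,\dots,n\}$ into $m$ non-empty blocks such that $1,\dots,r$ lie in pairwise distinct blocks. For a positive integer $r$ and integer $n\ge 0$, the $r$-Fubini number is $F_{n,r}=\sum_{k=0}^{n}(k+r)!\,S_r(n+r,k+r)$. *)

(* Defs.v *)
From mathcomp Require Import all_boot.
Set Implicit Arguments. Unset Strict Implicit. Unset Printing Implicit Defensive.

(* r-Stirling number of the second kind S_r(n,m): number of partitions of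
   {1,..,n} (here modelled as 'I_n = {0,..,n-1}, elements 1..r become 0..r-1)
   into m non-empty blocks such that the first r elements lie in pairwise
   distinct blocks. *)
Definition rstirling2 (r n m : nat) : nat :=
  #|[set P : {set {set 'I_n}} |
      [&& partition P [set: 'I_n], #|P| == m &
       [forall i : 'I_n, forall j : 'I_n,
          [&& (i < r)%N, (j < r)%N & i != j] ==> (pblock P i != pblock P j)]]]|.

Definition rfubini (n r : nat) : nat :=
  \sum_(0 <= k < n.+1) (k + r)`! * rstirling2 r (n + r) (k + r).

(* Main.v *)
Require Import Defs.
From mathcomp Require Import all_boot all_order all_algebra.
From mathcomp Require Import ring lra zify.
Set Implicit Arguments. Unset Strict Implicit. Unset Printing Implicit Defensive.

Module MC1.

Section Restr.
Variable T : finType.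
Implicit Types (P Q : {set {set T}}) (D R B C : {set T}) (x : T).

Lemma setD1_nin x B : x \notin B -> B :\ x = B.
Proof. by move=> xB; apply/setP=> y; rewrite !inE; case: eqP => // ->; rewrite (negbTE xB). Qed.

Definition restr x P := [set C :\ x | C in P] :\ set0.

Lemma pblock_in P D i : partition P D -> i \in D -> pblock P i \in P.
Proof. by move=> pP iD; apply: pblock_mem; rewrite (cover_partition pP). Qed.

Lemma mem_pblock_in P D i : partition P D -> i \in D -> i \in pblock P i.
Proof. by move=> pP iD; rewrite mem_pblock (cover_partition pP). Qed.

Lemma restr_partition P D x : x \notin D -> partition P (x |: D) ->
  partition (restr x P) D.
Proof.
move=> xD pP; have tP := partition_trivIset pP.
apply/and3P; split.
- apply/eqP/setP=> i; apply/bigcupP/idP.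
  + case=> C' /setD1P[_ /imsetP[C CP ->]] /setD1P[ix iC].
    have := partitionS pP CP => /subsetP/(_ _ iC); rewrite !inE (negbTE ix) //.
  + move=> iD; have iD': i \in x |: D by rewrite !inE iD orbT.
    exists (pblock P i :\ x); last first.
      by rewrite !inE (mem_pblock_in pP iD') andbT; apply: contraNneq xD => <-.
    apply/setD1P; split; last by apply/imsetP; exists (pblock P i); rewrite ?(pblock_in pP iD').
    apply/set0Pn; exists i; rewrite !inE (mem_pblock_in pP iD') andbT.
    by apply: contraNneq xD => <-.
- apply/trivIsetP=> A B /setD1P[_ /imsetP[C1 C1P ->]] /setD1P[_ /imsetP[C2 C2P ->]] ne.
  have ne12 : C1 != C2 by apply: contraNneq ne => ->.
  move/trivIsetP: tP => tP; have := tP C1 C2 C1P C2P ne12.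
  by apply: disjointW; apply: subD1set.
- by rewrite !inE eqxx.
Qed.

Lemma restr_pblock P D x i : x \notin D -> partition P (x |: D) -> i \in D ->
  pblock (restr x P) i = pblock P i :\ x.
Proof.
move=> xD pP iD; have iD': i \in x |: D by rewrite !inE iD orbT.
have ix : i != x by apply: contraNneq xD => <-.
apply: def_pblock; first exact: partition_trivIset (restr_partition xD pP).
  apply/setD1P; split; last by apply/imsetP; exists (pblock P i); rewrite ?(pblock_in pP iD').
  by apply/set0Pn; exists i; rewrite !inE (mem_pblock_in pP iD') ix.
by rewrite !inE (mem_pblock_in pP iD') ix.
Qed.

Lemma restr_same P D x i j : x \notin D -> partition P (x |: D) -> i \in D -> j \in D ->
  (pblock (restr x P) i == pblock (restr x P) j) = (pblock P i == pblock P j).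
Proof.
move=> xD pP iD jD; rewrite !(restr_pblock xD pP) //.
apply/eqP/eqP=> [E|->] //.
have iD': i \in x |: D by rewrite !inE iD orbT.
have ix : i != x by apply: contraNneq xD => <-.
have : i \in pblock P j :\ x by rewrite -E !inE ix (mem_pblock_in pP iD').
rewrite !inE => /andP[_ ij]; exact: same_pblock (partition_trivIset pP) ij.
Qed.

Lemma pblock_x P D x : partition P (x |: D) -> x \in pblock P x.
Proof. by move=> pP; apply: (mem_pblock_in pP); rewrite !inE eqxx. Qed.

Lemma partition_eq_pblock P1 P2 D : partition P1 D -> partition P2 D ->
  {in D, forall i, pblock P1 i = pblock P2 i} -> P1 = P2.
Proof.
move=> p1 p2 E.
suff H : forall P, partition P D -> P = [set pblock P i | i in D].
  rewrite (H _ p1) (H _ p2); apply: eq_in_imset => i iD; exact: E.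
move=> P pP; apply/setP=> C; apply/idP/imsetP.
- move=> CP; have /set0Pn[i iC] := partition_neq0 pP CP.
  exists i; first by have /subsetP := partitionS pP CP; apply.
  by rewrite (def_pblock (partition_trivIset pP) CP iC).
- by case=> i iD ->; exact: pblock_in pP iD.
Qed.

Lemma restr_uniq P1 P2 D x : x \notin D -> partition P1 (x |: D) -> partition P2 (x |: D) ->
  restr x P1 = restr x P2 -> pblock P1 x = pblock P2 x -> P1 = P2.
Proof.
move=> xD p1 p2 Er Ex; apply: (partition_eq_pblock p1 p2) => i.
case/setU1P=> [->|iD] //.
have t1 := partition_trivIset p1; have t2 := partition_trivIset p2.
have iD': i \in x |: D by rewrite !inE iD orbT.
case: (boolP (x \in pblock P1 i)) => xi.
  have h1 := same_pblock t1 xi.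
  have : i \in pblock P2 x by rewrite -Ex h1 (mem_pblock_in p1 iD').
  by move/(same_pblock t2) => ->; rewrite -h1.
have xi2 : x \notin pblock P2 i.
  apply: contra xi => xi2; have h2 := same_pblock t2 xi2.
  have : i \in pblock P1 x by rewrite Ex h2 (mem_pblock_in p2 iD').
  by move/(same_pblock t1) => ->; exact: pblock_x p1.
have := restr_pblock xD p1 iD; rewrite Er (restr_pblock xD p2 iD) => E.
by rewrite -(setD1_nin xi) -(setD1_nin xi2) E.
Qed.
End Restr.

End MC1.
Import MC1.

Module MC2.

Section Ins.
Variable T : finType.
Implicit Types (P Q : {set {set T}}) (D R B C : {set T}) (x : T).

Lemma notin_block Q D C x : partition Q D -> x \notin D -> C \in Q -> x \notin C.
Proof. by move=> pQ xD CQ; apply: contra xD; apply/subsetP/(partitionS pQ CQ). Qed.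

Lemma ins1_part Q D x : x \notin D -> partition Q D -> partition ([set x] |: Q) (x |: D).
Proof.
move=> xD pQ; apply: partitionU1 => //; first by apply/set0Pn; exists x; rewrite inE.
by rewrite disjoint_sym disjoints_subset; apply/subsetP=> y yD; rewrite !inE; apply: contraNneq xD => <-.
Qed.

Lemma ins1_nin Q D x : x \notin D -> partition Q D -> [set x] \notin Q.
Proof. by move=> xD pQ; apply/negP=> /(notin_block pQ xD); rewrite inE eqxx. Qed.

Lemma ins1_card Q D x : x \notin D -> partition Q D -> #|[set x] |: Q| = #|Q|.+1.
Proof. by move=> xD pQ; rewrite cardsU1 (ins1_nin xD pQ). Qed.

Lemma ins1_pblock Q D x : x \notin D -> partition Q D -> pblock ([set x] |: Q) x = [set x].
Proof.
move=> xD pQ; apply: def_pblock; last by rewrite inE.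
  exact: partition_trivIset (ins1_part xD pQ).
by rewrite setU11.
Qed.

Lemma ins1_restr Q D x : x \notin D -> partition Q D -> restr x ([set x] |: Q) = Q.
Proof.
move=> xD pQ; apply/setP=> C'; apply/setD1P/idP.
- case=> ne /imsetP[C /setU1P[->|CQ] E]; rewrite E in ne *.
    by move: ne; rewrite (_ : [set x] :\ x = set0) ?eqxx //; apply/setP=> y; rewrite !inE andNb.
  by rewrite setD1_nin // (notin_block pQ xD CQ).
- move=> CQ; split; first by apply: (partition_neq0 pQ CQ).
  apply/imsetP; exists C'; first by rewrite setU1r.
  by rewrite setD1_nin // (notin_block pQ xD CQ).
Qed.

Definition ins2 x Q B := (x |: B) |: (Q :\ B).

Lemma ins2_part Q D B x : x \notin D -> partition Q D -> B \in Q ->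
  partition (ins2 x Q B) (x |: D).
Proof.
move=> xD pQ BQ; have sBD := partitionS pQ BQ.
have -> : x |: D = (x |: B) :|: (D :\: B).
  apply/setP=> y; rewrite !inE; case: (y == x) => //=.
  by case: (boolP (y \in B)) => yB //=; rewrite (subsetP sBD).
apply: partitionU1; first exact: partitionD1.
  by apply/set0Pn; exists x; rewrite !inE eqxx.
rewrite disjoints_subset; apply/subsetP=> y; rewrite !inE.
case/orP=> [/eqP->|yB]; first by rewrite (negbTE xD) andbF.
by rewrite yB.
Qed.

Lemma ins2_pblock Q D B x : x \notin D -> partition Q D -> B \in Q ->
  pblock (ins2 x Q B) x = x |: B.
Proof.
move=> xD pQ BQ; apply: def_pblock; last by rewrite setU11.
  exact: partition_trivIset (ins2_part xD pQ BQ).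
by rewrite setU11.
Qed.

Lemma ins2_nin Q D B x : x \notin D -> partition Q D -> B \in Q -> x |: B \notin Q :\ B.
Proof.
move=> xD pQ BQ; apply/negP=> /setD1P[_ /(notin_block pQ xD)].
by rewrite setU11.
Qed.

Lemma ins2_card Q D B x : x \notin D -> partition Q D -> B \in Q ->
  #|ins2 x Q B| = #|Q|.
Proof.
move=> xD pQ BQ; rewrite /ins2 cardsU1 (ins2_nin xD pQ BQ).
by rewrite [#|Q|](cardsD1 B) BQ.
Qed.

Lemma ins2_restr Q D B x : x \notin D -> partition Q D -> B \in Q ->
  restr x (ins2 x Q B) = Q.
Proof.
move=> xD pQ BQ; have xB := notin_block pQ xD BQ.
apply/setP=> C'; apply/setD1P/idP.
- case=> ne /imsetP[C /setU1P[->|/setD1P[_ CQ]] E]; rewrite E in ne *.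
    by rewrite setU1K.
  by rewrite setD1_nin // (notin_block pQ xD CQ).
- move=> CQ; split; first by apply: (partition_neq0 pQ CQ).
  case: (eqVneq C' B) => [->|ne].
    by apply/imsetP; exists (x |: B); rewrite ?setU11 ?setU1K.
  apply/imsetP; exists C'; first by rewrite !inE ne CQ orbT.
  by rewrite setD1_nin // (notin_block pQ xD CQ).
Qed.
End Ins.

End MC2.
Import MC2.

Module MC3.

Section Good.
Variable T : finType.
Implicit Types (P Q : {set {set T}}) (D R B C : {set T}) (x : T).

Definition dist R P := [forall i in R, forall j in R, (i != j) ==> (pblock P i != pblock P j)].
Definition good R D M P := [&& partition P D, #|P| == M & dist R P].
Definition G R D M := [set P | good R D M P].

Lemma dist_restr R D P x : x \notin D -> R \subset D -> partition P (x |: D) ->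
  dist R (restr x P) = dist R P.
Proof.
move=> xD RD pP; apply/forall_inP/forall_inP=> H i iR; move: (H i iR) => /forall_inP H2;
  apply/forall_inP=> j jR; move: (H2 j jR);
  by rewrite (restr_same xD pP (subsetP RD _ iR) (subsetP RD _ jR)).
Qed.

Lemma recG R D M x : x \notin D -> R \subset D ->
  #|G R (x |: D) M.+1| = M.+1 * #|G R D M.+1| + #|G R D M|.
Proof.
move=> xD RD.
rewrite -(cardsID [set P : {set {set T}} | [set x] \in P] (G R (x |: D) M.+1)) addnC.
congr (_ + _).
- pose S := [set u : {set {set T}} * {set T} | (u.1 \in G R D M.+1) && (u.2 \in u.1)].
  have cardS : #|S| = M.+1 * #|G R D M.+1|.
    rewrite -sum1_card.
    rewrite (eq_bigl (fun u => (u.1 \in G R D M.+1) && (u.2 \in u.1))); last by move=> u; rewrite inE.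
    rewrite -(pair_big_dep (fun Q => Q \in G R D M.+1) (fun Q B => B \in Q) (fun _ _ => 1)) /=.
    rewrite mulnC -sum_nat_const; apply: eq_bigr => Q; rewrite inE => /and3P[_ /eqP <- _].
    by rewrite sum1_card.
  rewrite -cardS -(@card_in_imset _ _ (fun u => ins2 x u.1 u.2)).
    apply: eq_card => P; apply/idP/imsetP.
    + rewrite !inE => /andP[nx /and3P[pP /eqP cP dP]].
      have xP : x \in cover P by rewrite (cover_partition pP) setU11.
      set Q := restr x P; set B := pblock P x :\ x.
      have pQ := restr_partition xD pP.
      have BQ : B \in Q.
        apply/setD1P; split; last by apply/imsetP; exists (pblock P x); rewrite ?pblock_mem.
        apply: contra nx => /eqP B0.
        suff -> : [set x] = pblock P x by rewrite pblock_mem.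
        apply/setP=> y; rewrite inE; apply/eqP/idP=> [->|yP]; first by rewrite mem_pblock.
        by apply/eqP; apply: contraT => ne; rewrite -(in_set0 y) -B0 !inE ne yP.
      have E : P = ins2 x Q B.
        apply: (restr_uniq xD pP (ins2_part xD pQ BQ)).
          by rewrite (ins2_restr xD pQ BQ).
        by rewrite (ins2_pblock xD pQ BQ) setD1K // mem_pblock.
      exists (Q, B) => //; rewrite inE /= BQ andbT inE.
      rewrite /good pQ /= -(ins2_card xD pQ BQ) -E cP eqxx /=.
      by rewrite /Q (dist_restr xD RD pP).
    + case=> [[Q B]]; rewrite inE /= => /andP[]; rewrite inE => /and3P[pQ /eqP cQ dQ] BQ ->.
      have pP := ins2_part xD pQ BQ.
      rewrite !inE /good pP (ins2_card xD pQ BQ) cQ eqxx /=.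
      rewrite -(dist_restr xD RD pP) (ins2_restr xD pQ BQ) dQ andbT.
      apply/negP=> /orP[/eqP E|/andP[_ /(notin_block pQ xD)]]; last by rewrite inE eqxx.
      have /set0Pn[y yB] := partition_neq0 pQ BQ.
      have : y \in [set x] by rewrite E !inE yB orbT.
      rewrite inE => /eqP yx.
      by have := notin_block pQ xD BQ; rewrite -yx yB.
  move=> [Q1 B1] [Q2 B2]; rewrite !inE /= => /andP[/and3P[pQ1 _ _] BQ1] /andP[/and3P[pQ2 _ _] BQ2] E.
  have E1 := ins2_restr xD pQ1 BQ1; have E2 := ins2_restr xD pQ2 BQ2.
  have F1 := ins2_pblock xD pQ1 BQ1; have F2 := ins2_pblock xD pQ2 BQ2.
  rewrite E in E1 F1; rewrite E1 in E2; rewrite F1 in F2.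
  congr (_, _) => //.
  by rewrite -(setU1K (notin_block pQ1 xD BQ1)) F2 setU1K // (notin_block pQ2 xD BQ2).
- rewrite -(@card_in_imset _ _ (fun Q => [set x] |: Q) (G R D M)).
    apply: eq_card => P; apply/idP/imsetP.
    + rewrite !inE => /andP[/and3P[pP /eqP cP dP] nx].
      set Q := restr x P; have pQ := restr_partition xD pP.
      have E : P = [set x] |: Q.
        apply: (restr_uniq xD pP (ins1_part xD pQ)); first by rewrite (ins1_restr xD pQ).
        by rewrite (ins1_pblock xD pQ); apply: def_pblock; rewrite ?inE ?(partition_trivIset pP).
      exists Q => //; rewrite inE /good pQ /= /Q (dist_restr xD RD pP) dP andbT.
      by move: cP; rewrite {1}E (ins1_card xD pQ) => -[<-].
    + case=> Q; rewrite inE => /and3P[pQ /eqP cQ dQ] ->.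
      have pP := ins1_part xD pQ.
      rewrite !inE eqxx /= /good pP (ins1_card xD pQ) cQ eqxx /=.
      by rewrite andbT -(dist_restr xD RD pP) (ins1_restr xD pQ).
  move=> Q1 Q2; rewrite !inE => /and3P[pQ1 _ _] /and3P[pQ2 _ _] E.
  by rewrite -(ins1_restr xD pQ1) E (ins1_restr xD pQ2).
Qed.
End Good.

End MC3.
Import MC3.

Module MC4.

Section Base.
Variable T : finType.
Implicit Types (P Q : {set {set T}}) (D R B C : {set T}) (x : T).

Lemma distP R P : reflect {in R &, injective (pblock P)} (dist R P).
Proof.
apply: (iffP forall_inP) => [H i j iR jR E|H i iR].
  by move: (H i iR) => /forall_inP/(_ j jR)/implyP; case: eqP => // _ /(_ isT); rewrite E eqxx.
by apply/forall_inP=> j jR; apply/implyP; apply: contraNneq => /H ->.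
Qed.

Lemma good_le R D m P : R \subset D -> good R D m P -> #|R| <= m.
Proof.
move=> RD /and3P[pP /eqP <- /distP inj].
rewrite -(card_in_imset inj); apply: subset_leq_card; apply/subsetP=> _ /imsetP[i iR ->].
by apply: pblock_mem; rewrite (cover_partition pP) (subsetP RD).
Qed.

Lemma G_zero R D m : R \subset D -> m < #|R| -> #|G R D m| = 0.
Proof.
move=> RD lt; apply/eqP; rewrite cards_eq0; apply/eqP/setP=> P; rewrite !inE.
by apply/negP=> /(good_le RD); rewrite leqNgt lt.
Qed.

Definition disc R := [set [set i] | i in R].

Lemma disc_part R : partition (disc R) R.
Proof.
apply/and3P; split.
- apply/eqP/setP=> i; apply/bigcupP/idP=> [[_ /imsetP[j jR ->]]|iR]; first by rewrite inE => /eqP->.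
  by exists [set i]; rewrite ?inE // imset_f.
- apply/trivIsetP=> _ _ /imsetP[i iR ->] /imsetP[j jR ->] ne.
  rewrite disjoints_subset; apply/subsetP=> y; rewrite !inE => /eqP ->.
  by apply: contraNneq ne => ->.
- by apply/imsetP=> -[i _ /eqP]; rewrite eq_sym -cards_eq0 cards1.
Qed.

Lemma disc_pblock R i : i \in R -> pblock (disc R) i = [set i].
Proof.
move=> iR; apply: def_pblock; rewrite ?inE //; first exact: partition_trivIset (disc_part R).
exact: imset_f.
Qed.

Lemma card_disc R : #|disc R| = #|R|.
Proof. by apply: card_in_imset => i j _ _; apply: set1_inj. Qed.

Lemma good_base R m P : good R R m P -> P = disc R.
Proof.
case/and3P=> pP _ /distP inj; apply: (partition_eq_pblock pP (disc_part R)) => i iR.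
rewrite disc_pblock //; apply/setP=> j; rewrite inE; apply/idP/eqP=> [jP|->].
  have jR : j \in R by apply: (subsetP (partitionS pP (pblock_in pP iR))).
  by apply: inj => //; apply: same_pblock (partition_trivIset pP) jP.
by rewrite mem_pblock (cover_partition pP).
Qed.

Lemma G_base R m : #|G R R m| = (m == #|R|).
Proof.
case: (eqVneq m #|R|) => [->|ne].
  apply/eqP/cards1P; exists (disc R); apply/setP=> P.
  rewrite !inE; apply/idP/eqP=> [/good_base //|->].
  rewrite /good disc_part card_disc eqxx /=; apply/distP=> i j iR jR.
  by rewrite !disc_pblock //; apply: set1_inj.
apply/eqP; rewrite cards_eq0; apply/eqP/setP=> P; rewrite !inE.
apply/negP=> gP; have E := good_base gP; move: gP ne; rewrite E /good card_disc.
by case/and3P=> _ /eqP -> _; rewrite eqxx.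
Qed.
End Base.

Section Transport.
Variables (T T' : finType) (f : T -> T') (finj : injective f).
Implicit Types (P : {set {set T}}) (D R : {set T}).

Definition Phi P : {set {set T'}} := [set f @: (B : {set T}) | B in P].

Lemma Phi_pblock P D i : partition P D -> i \in D -> pblock (Phi P) (f i) = f @: pblock P i.
Proof.
move=> pP iD; apply: def_pblock.
- by rewrite /Phi imset_trivIset // (partition_trivIset pP).
- by apply: imset_f; apply: pblock_mem; rewrite (cover_partition pP).
- by apply: imset_f; rewrite mem_pblock (cover_partition pP).
Qed.

Lemma Phi_good R D m P : R \subset D -> good (f @: R) (f @: D) m (Phi P) = good R D m P.
Proof.
move=> RD; rewrite /good /Phi imset_partition //.
case: (boolP (partition P D)) => //= pP.
rewrite card_in_imset; last by move=> A B _ _; apply: imset_inj.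
congr (_ && _); apply/distP/distP => inj.
  move=> i j iR jR E; apply: finj; apply: inj; rewrite ?imset_f //.
  by rewrite !(Phi_pblock pP) ?(subsetP RD) // E.
move=> _ _ /imsetP[i iR ->] /imsetP[j jR ->].
rewrite !(Phi_pblock pP) ?(subsetP RD) // => /(imset_inj finj) E.
by rewrite (inj i j iR jR E).
Qed.

Lemma G_transport R D m : R \subset D -> #|G R D m| = #|G (f @: R) (f @: D) m|.
Proof.
move=> RD; rewrite -(@card_in_imset _ _ Phi); last first.
  by move=> A B _ _; apply: imset_inj; apply: imset_inj.
apply: eq_card => P'; apply/imsetP/idP.
  by case=> P; rewrite !inE => gP ->; rewrite Phi_good.
rewrite inE => gP'; have pP' : partition P' (f @: D) by case/and3P: gP'.
exists [set f @^-1: (B : {set T'}) | B in P'].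
  rewrite inE -(Phi_good _ _ RD).
  suff -> : Phi [set f @^-1: (B : {set T'}) | B in P'] = P' by [].
  rewrite /Phi -imset_comp; apply: etrans (imset_id _); apply: eq_in_imset => B BP /=.
  have sB := partitionS pP' BP.
  apply/setP=> y; apply/imsetP/idP=> [[z] |yB]; first by rewrite inE => zB ->.
  have /imsetP[z _ E] := subsetP sB _ yB; exists z => //; by rewrite inE -E.
rewrite /Phi -imset_comp; apply/esym; apply: etrans (imset_id _); apply: eq_in_imset => B BP /=.
have sB := partitionS pP' BP.
apply/setP=> y; apply/imsetP/idP=> [[z] |yB]; first by rewrite inE => zB ->.
have /imsetP[z _ E] := subsetP sB _ yB; exists z => //; by rewrite inE -E.
Qed.
End Transport.

End MC4.
Import MC4.

Module MC5.

Definition Rset r n : {set 'I_n} := [set i : 'I_n | i < r].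

Lemma rstirling2_G r n m : rstirling2 r n m = #|G (Rset r n) setT m|.
Proof.
rewrite /rstirling2; apply: eq_card => P; rewrite !inE /good.
case: (partition P [set: 'I_n]) (#|P| == m) => //= [] [] //=.
apply/forallP/distP => [H i j|H i].
  rewrite !inE => ir jr E; apply/eqP; apply: contraTT (H i) => ne.
  by apply/forallPn; exists j; rewrite ir jr ne /= E eqxx.
apply/forallP=> j; apply/implyP=> /and3P[ir jr ne]; apply: contra ne => /eqP E.
by apply/eqP; apply: H; rewrite ?inE.
Qed.

Lemma Rset_widen r n (H : r <= n) : Rset r n = (widen_ord H) @: [set: 'I_r].
Proof.
apply/setP=> i; rewrite inE; apply/idP/imsetP=> [ir|[j _ ->]]; last by rewrite /= ltn_ord.
by exists (Ordinal ir) => //; apply: val_inj.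
Qed.

Lemma card_Rset r n : r <= n -> #|Rset r n| = r.
Proof.
move=> Hrn; rewrite (Rset_widen Hrn) card_imset ?cardsT ?card_ord //.
move=> a b E; apply: val_inj; exact: (congr1 val E).
Qed.

Lemma rst_base r m : rstirling2 r r m = (m == r).
Proof.
rewrite rstirling2_G (_ : setT = Rset r r) ?G_base ?card_Rset //.
by apply/setP=> i; rewrite !inE ltn_ord.
Qed.

Lemma rst_zero r n m : r <= n -> m < r -> rstirling2 r n m = 0.
Proof.
move=> rn mr; rewrite rstirling2_G G_zero ?subsetT // card_Rset //.
Qed.

Lemma rst_rec r N M : r <= N ->
  rstirling2 r N.+1 M.+1 = M.+1 * rstirling2 r N M.+1 + rstirling2 r N M.
Proof.
move=> rN.
pose f := widen_ord (leqnSn N).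
have finj : injective f by move=> a b E; apply: val_inj; exact: (congr1 val E).
have E1 : f @: Rset r N = Rset r N.+1.
  apply/setP=> i; rewrite inE; apply/imsetP/idP=> [[j] |ir].
    by rewrite inE => jr ->.
  have iN : i < N by apply: leq_trans rN.
  by exists (Ordinal iN); rewrite ?inE //; apply: val_inj.
set D := f @: [set: 'I_N].
have xD : (@ord_max N) \notin D.
  by apply/imsetP=> -[j _ /(congr1 val)] /= E; move: (ltn_ord j); rewrite -E ltnn.
have E2 : ord_max |: D = setT.
  apply/setP=> i; rewrite !inE; case: (eqVneq i ord_max) => //= ne.
  have iN : i < N.
    by move: (ltn_ord i); rewrite ltnS leq_eqVlt => /orP[/eqP E|] //; case/eqP: ne; apply: val_inj.
  by apply/imsetP; exists (Ordinal iN) => //; apply: val_inj.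
have RD : Rset r N.+1 \subset D by rewrite -E1; apply: imsetS; apply: subsetT.
rewrite !rstirling2_G !(@G_transport _ _ f finj (Rset r N) setT _ (subsetT _)) E1 -/D.
by rewrite -E2 recG.
Qed.

End MC5.
Import MC5.

Module MN1.
Import Order.TTheory GRing.Theory Num.Theory.
Local Open Scope ring_scope.

Fixpoint Dl (n k : nat) (x : int) : int :=
  if k is k'.+1 then Dl n k' (x + 1) - Dl n k' x else x ^+ n.

Lemma Dl_S n k x : Dl n k.+1 x = Dl n k (x + 1) - Dl n k x.
Proof. by []. Qed.

Lemma Dl_leib n k x : Dl n.+1 k.+1 x = x * Dl n k.+1 x + k.+1%:R * Dl n k (x + 1).
Proof.
elim: k x => [|k IH] x.
  by rewrite /= !exprS; ring.
rewrite Dl_S IH IH !Dl_S -!natr1; ring.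
Qed.

Lemma Dl_zero n k x : (n < k)%N -> Dl n k x = 0.
Proof.
elim: n k x => [|n IH] [|k] x //.
  move=> _; elim: k x => [|k IHk] x; first by rewrite /= !expr0 subrr.
  by rewrite Dl_S !IHk subrr.
rewrite ltnS => nk; rewrite Dl_leib (IH k.+1) ?(IH k) ?mulr0 ?addr0 //.
exact: ltnW.
Qed.

Definition shc (c : nat -> int) (j : nat) : int := if j is j'.+1 then c j' else 0.

Lemma shiftsum (c g : nat -> int) N :
  \sum_(j < N) c j * g j.+1 = \sum_(j < N) shc c j * g j + shc c N * g N.
Proof.
have := big_ord_recr N (fun j : 'I_N.+1 => shc c j * g j) => /= <-.
by rewrite big_ord_recl /= mul0r add0r.
Qed.

End MN1.
Import MN1.

Module MN2.
Import Order.TTheory GRing.Theory Num.Theory.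
Local Open Scope ring_scope.

Lemma Dl_stir r n k : (0 < r)%N ->
  ((k`! * rstirling2 r (n + r) (k + r))%N%:R : int) = Dl n k r%:R.
Proof.
move=> r0; elim: n k => [|n IH] k.
  rewrite add0n rst_base -{2}(add0n r) eqn_add2r.
  case: k => [|k]; first by rewrite /= expr0.
  by rewrite muln0 Dl_zero.
rewrite addSn; case: k => [|k].
  rewrite add0n -{2 3}(prednK r0) rst_rec ?leq_addl // prednK //.
  rewrite (@rst_zero r (n + r) r.-1) ?leq_addl ?prednK //.
  have := IH 0%N; rewrite add0n /= => h.
  rewrite addn0 !mul1n natrM exprS; rewrite mul1n in h; rewrite h.
  by [].
  exact: leq_addl.
rewrite addSn rst_rec ?leq_addl //.
have h1 := IH k.+1; have h0 := IH k; rewrite addSn in h1.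
have E : (k.+1`! * ((k + r).+1 * rstirling2 r (n + r) (k + r).+1 + rstirling2 r (n + r) (k + r)))%N
   = ((k + r).+1 * (k.+1`! * rstirling2 r (n + r) (k + r).+1) + k.+1 * (k`! * rstirling2 r (n + r) (k + r)))%N.
  by rewrite factS; ring.
rewrite E natrD (natrM _ (k + r).+1) (natrM _ k.+1) h1 h0 Dl_leib Dl_S -!natr1 !natrD; ring.
Qed.

End MN2.
Import MN2.

Module MN3.
Import Order.TTheory GRing.Theory Num.Theory.
Local Open Scope ring_scope.

Definition U n r (x : int) : int := \sum_(k < n.+1) 'C(k + r, r)%:R * Dl n k x.

Lemma F_U n r : (0 < r)%N -> (rfubini n r)%:R = r`!%:R * U n r r%:R :> int.
Proof.
move=> r0; rewrite /rfubini big_mkord natr_sum /U mulr_sumr; apply: eq_bigr => k _.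
have B := bin_fact (leq_addl k r); rewrite addnK in B.
rewrite -B (_ : ('C(k + r, r) * (r`! * k`!) * rstirling2 r (n + r) (k + r) =
   r`! * 'C(k + r, r) * (k`! * rstirling2 r (n + r) (k + r)))%N); last by ring.
by rewrite natrM Dl_stir // natrM mulrA.
Qed.

Lemma DlS' n k x : Dl n k (x + 1) = Dl n k.+1 x + Dl n k x.
Proof. by rewrite Dl_S subrK. Qed.

Lemma U_shift n (c : nat -> int) x : \sum_(k < n.+1) c k * Dl n k (x + 1) =
  \sum_(k < n.+1) (c k + shc c k) * Dl n k x.
Proof.
rewrite (eq_bigr (fun k : 'I_n.+1 => c k * Dl n k.+1 x + c k * Dl n k x)); last first.
  by move=> k _; rewrite DlS' mulrDr.
rewrite big_split /= (shiftsum c (fun k => Dl n k x)) Dl_zero // mulr0 addr0.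
by rewrite addrC -big_split /=; apply: eq_bigr => k _; rewrite mulrDl.
Qed.

Lemma U_step n r x : U n r.+1 (x + 1) = 2 * U n r.+1 x - U n r x.
Proof.
rewrite /U (U_shift n (fun j => ('C(j + r.+1, r.+1))%:R)) mulr_sumr -sumrB; apply: eq_bigr => k _.
have -> : shc (fun k => ('C(k + r.+1, r.+1))%:R) k = 'C(k + r.+1, r.+1)%:R - 'C(k + r, r)%:R :> int.
  case: k => [[|k] _] /=; first by rewrite !add0n !binn subrr.
  by rewrite addSn binS natrD addnS addSn addrK.
ring.
Qed.

Lemma U0_step n x : U n 0 (x + 1) = 2 * U n 0 x - x ^+ n.
Proof.
rewrite /U (U_shift n (fun j => ('C(j + 0, 0))%:R)) mulr_sumr big_ord_recl [in RHS]big_ord_recl /=.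
rewrite (eq_bigr (fun k : 'I_n => 2 * Dl n (bump 0 k) x)); last by move=> k _; rewrite !bin0 /=; ring.
rewrite [in RHS](eq_bigr (fun k : 'I_n => 2 * Dl n (bump 0 k) x)); last by move=> k _; rewrite !bin0 /=; ring.
by rewrite !bin0 /=; ring.
Qed.

End MN3.
Import MN3.

Module MN4.
Import Order.TTheory GRing.Theory Num.Theory.
Local Open Scope ring_scope.

Definition h n (y : int) (j : nat) : int := 2 ^+ j * (y - j%:R) ^+ n.
Definition V n N r (x : int) : int :=
  (-1) ^+ r.+1 * \sum_(j < N) 'C(j + r, r)%:R * h n (x - r.+1%:R) j.

Lemma coefC r k : ('C(k + r.+1, r.+1)%:R : int) =
  shc (fun j => 'C(j + r.+1, r.+1)%:R) k + 'C(k + r, r)%:R.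
Proof.
case: k => [|k] /=; first by rewrite !add0n !binn add0r.
by rewrite addSn binS natrD addnS addSn.
Qed.

Lemma h_shift n y j : 2 * h n (y - 1) j = h n y j.+1.
Proof. by rewrite /h exprS -mulrA -natr1; congr (_ * (_ * (_ ^+ _))); ring. Qed.

Lemma h_dvd n y N : (2 ^+ N %| h n y N)%Z.
Proof. by apply: dvdz_mulr; apply: dvdzz. Qed.

Lemma V_step n N r x : (2 ^+ N %| V n N r.+1 (x + 1) - (2 * V n N r.+1 x - V n N r x))%Z.
Proof.
set y := x - r.+1%:R.
have e1 : x + 1 - r.+2%:R = y by rewrite /y -!natr1; ring.
have e2 : x - r.+2%:R = y - 1 by rewrite /y -!natr1; ring.
rewrite /V e1 e2.
set a := fun j => ('C(j + r.+1, r.+1))%:R : int.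
set S1 := \sum_(j < N) 'C(j + r.+1, r.+1)%:R * h n y j.
set S2 := \sum_(j < N) 'C(j + r.+1, r.+1)%:R * h n (y - 1) j.
set S3 := \sum_(j < N) 'C(j + r, r)%:R * h n y j.
set S4 := \sum_(j < N) shc a j * h n y j.
have E2 : 2 * S2 = S4 + shc a N * h n y N.
  rewrite /S4 -(shiftsum a (h n y)) /S2 mulr_sumr; apply: eq_bigr => j _.
  by rewrite mulrCA h_shift.
have E1 : S1 = S4 + S3.
  rewrite /S4 /S3 -big_split; apply: eq_bigr => j _ /=.
  by rewrite -mulrDl -coefC.
have -> : (-1) ^+ r.+2 * S1 - (2 * ((-1) ^+ r.+2 * S2) - (-1) ^+ r.+1 * S3)
   = - ((-1) ^+ r.+2 * shc a N) * h n y N.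
  have -> : 2 * ((-1) ^+ r.+2 * S2) = (-1) ^+ r.+2 * (2 * S2) by ring.
  rewrite E2 E1 exprS; ring.
by apply: dvdz_mull; apply: h_dvd.
Qed.

Lemma V0_step n N x : (2 ^+ N %| V n N 0 (x + 1) - (2 * V n N 0 x - x ^+ n))%Z.
Proof.
case: N => [|N]; first by rewrite expr0 dvd1z.
have e1 : x + 1 - 1%:R = x by ring.
have e0 : x - 1%:R = x - 1 by ring.
rewrite /V e1 e0.
set c := fun _ : nat => 1 : int.
set T1 := \sum_(j < N.+1) 'C(j + 0, 0)%:R * h n x j.
set T2 := \sum_(j < N.+1) 'C(j + 0, 0)%:R * h n (x - 1) j.
have E2 : 2 * T2 = \sum_(j < N.+1) shc c j * h n x j + shc c N.+1 * h n x N.+1.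
  rewrite -(shiftsum c (h n x)) /T2 mulr_sumr; apply: eq_bigr => j _.
  by rewrite mulrCA h_shift bin0 /c.
have E1 : \sum_(j < N.+1) shc c j * h n x j = T1 - x ^+ n.
  rewrite /T1 !big_ord_recl /= bin0 /h expr0 !mul1r subr0 mul0r add0r addrC addKr.
  by apply: eq_bigr => j _; rewrite bin0 mul1r.
have -> : (-1) ^+ 1 * T1 - (2 * ((-1) ^+ 1 * T2) - x ^+ n) = shc c N.+1 * h n x N.+1.
  have -> : 2 * ((-1) ^+ 1 * T2) = (-1) ^+ 1 * (2 * T2) by ring.
  rewrite E2 E1; ring.
by apply: dvdz_mull; apply: h_dvd.
Qed.

End MN4.
Import MN4.

Module MN5.
Import Order.TTheory GRing.Theory Num.Theory.
Local Open Scope ring_scope.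

Lemma dvd_iter (d : int) (w : int -> int) : (forall x, (d %| w (x + 1) - 2 * w x)%Z) ->
  forall t x, (d %| w x - 2 ^+ t * w (x - t%:R))%Z.
Proof.
move=> H; elim=> [|t IH] x; first by rewrite expr0 mul1r subr0 subrr dvdz0.
have := H (x - t.+1%:R); rewrite (_ : x - t.+1%:R + 1 = x - t%:R); last by rewrite -natr1; ring.
move=> H2.
have -> : w x - 2 ^+ t.+1 * w (x - t.+1%:R) =
  (w x - 2 ^+ t * w (x - t%:R)) + 2 ^+ t * (w (x - t%:R) - 2 * w (x - t.+1%:R)).
  by rewrite exprS; ring.
by apply: rpredD => //; apply: dvdz_mull.
Qed.

Lemma dvd_all (N : nat) (w : int -> int) : (forall x, (2 ^+ N %| w (x + 1) - 2 * w x)%Z) ->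
  forall x, (2 ^+ N %| w x)%Z.
Proof.
move=> H x; have := dvd_iter H N x => H2.
have -> : w x = (w x - 2 ^+ N * w (x - N%:R)) + 2 ^+ N * w (x - N%:R) by ring.
by apply: rpredD => //; apply: dvdz_mulr.
Qed.

Lemma UV n N r x : (2 ^+ N %| U n r x - V n N r x)%Z.
Proof.
elim: r x => [|r IH] x.
  apply: (dvd_all (w := fun x => U n 0 x - V n N 0 x)) => y.
  have -> : U n 0 (y + 1) - V n N 0 (y + 1) - 2 * (U n 0 y - V n N 0 y) =
     - (V n N 0 (y + 1) - (2 * V n N 0 y - y ^+ n)) by rewrite U0_step; ring.
  by rewrite rpredN V0_step.
apply: (dvd_all (w := fun x => U n r.+1 x - V n N r.+1 x)) => y.
have -> : U n r.+1 (y + 1) - V n N r.+1 (y + 1) - 2 * (U n r.+1 y - V n N r.+1 y) =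
   - (V n N r.+1 (y + 1) - (2 * V n N r.+1 y - V n N r y)) - (U n r y - V n N r y).
  by rewrite U_step; ring.
by apply: rpredB; [rewrite rpredN; apply: V_step | apply: IH].
Qed.

Lemma F_V n N r : (0 < r)%N ->
  (2 ^+ N %| (rfubini n r)%:R - r`!%:R * V n N r r%:R)%Z.
Proof.
move=> r0; rewrite F_U // -mulrBr; apply: dvdz_mull; exact: UV.
Qed.

End MN5.
Import MN5.

Module MN6.
Import Order.TTheory GRing.Theory Num.Theory.

Lemma pow2lift a s : odd a -> 0 < s -> 2 ^ s.+2 %| a ^ (2 ^ s) - 1.
Proof.
move=> oa; elim: s => [//|s IH] _.
have sq : forall b, 0 < b -> b ^ 2 - 1 = (b - 1) * (b + 1).
  by move=> b b0; have := subn_sqr b 1; rewrite exp1n.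
have a0 : 0 < a by move: oa; case: (a).
rewrite (expnS 2 s) mulnC expnM sq ?expn_gt0 ?a0 //.
case: s IH => [_|s IH].
  rewrite ?expn1 ?expn0 ?expn1 -(odd_double_half a) oa.
  set c := a./2.
  have -> : (true + c.*2 - 1) * (true + c.*2 + 1) = 4 * (c * c.+1).
    rewrite -!mul2n /= add1n subn1 /=; nia.
  rewrite (_ : 2 ^ 3 = 4 * 2) // dvdn_pmul2l // dvdn2 oddM /=.
  by case: (odd c).
rewrite (_ : 2 ^ s.+1.+1.+2 = 2 ^ s.+1.+2 * 2); last by rewrite expnSr.
apply: dvdn_mul; first exact: IH.
rewrite dvdn2 addn1 /= oddX oa orbT //.
Qed.

End MN6.
Import MN6.

Module MN7.
Import Order.TTheory GRing.Theory Num.Theory.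

Lemma four_dvd r : 2 <= r -> 4 %| r`! * 'C(2 + r, r).
Proof.
move=> r2; have B := bin_fact (leq_addl 2 r); rewrite addnK in B.
have H8 : 8 %| (2 + r)`!.
  rewrite -(ffact_fact (_ : 4 <= 2 + r)); last by lia.
  rewrite -bin_ffact (_ : 4`! = 8 * 3) //; apply: dvdn_mulr; apply: dvdn_mull; exact: dvdn_mulr.
rewrite -(@dvdn_pmul2r 2) //.
rewrite (_ : r`! * 'C(2 + r, r) * 2 = 'C(2 + r, r) * (r`! * 2`!)); last by rewrite (_ : 2`! = 2) //; ring.
by rewrite B.
Qed.

Local Open Scope ring_scope.

Lemma term_dvd r m n (j : nat) : (2 <= r)%N -> (7 <= m)%N -> (m - 1 <= n)%N -> (j < m)%N ->
  (2 ^+ m %| r`!%:R * ('C(j + r, r)%:R * h (n + 2 ^ (m - 6)) (-1) j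
                       - 'C(j + r, r)%:R * h n (-1) j))%Z.
Proof.
move=> r2 m7 nm jm; set p := (2 ^ (m - 6))%N.
have pe : ~~ odd p by rewrite /p oddX /=; apply/negP => /eqP; lia.
set a : nat := j.+1.
have ea : (-1 - j%:R : int) = - a%:R by rewrite /a -natr1; ring.
rewrite /h ea.
have -> : r`!%:R * ('C(j + r, r)%:R * (2 ^+ j * (- a%:R) ^+ (n + p)) -
    'C(j + r, r)%:R * (2 ^+ j * (- a%:R) ^+ n)) =
    (r`!%:R * 'C(j + r, r)%:R) * (2 ^+ j * ((- a%:R) ^+ n * ((- a%:R) ^+ p - 1))) :> int.
  by rewrite exprD; ring.
case: (boolP (odd j)) => oj.
  apply: dvdz_mull.
  have a2 : (2 %| - (a%:R : int))%Z.
    rewrite rpredN natz /= dvdzE /= dvdn2 /a /= oj //.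
  apply: (@dvdz_trans (2 ^+ j * 2 ^+ n)).
    rewrite -exprD; apply: dvdz_exp2l.
    by case: j jm oj {a ea a2} => //= j _ _; lia.
  apply: dvdz_mul => //; apply: dvdz_mulr; exact: dvdz_exp2r.
have -> : (- (a%:R : int)) ^+ p = a%:R ^+ p.
  by rewrite exprNn -signr_odd (negbTE pe) expr0 mul1r.
have ao : odd a by rewrite /a /= oj.
have L : (2 ^ (m - 6).+2 %| a ^ p - 1)%N by apply: pow2lift ao _; lia.
have L' : (2 ^+ (m - 4) %| (a%:R ^+ p - 1 : int))%Z.
  have -> : (a%:R ^+ p - 1 : int) = ((a ^ p - 1)%N)%:R.
    by rewrite natrB ?expn_gt0 // natrX.
  have -> : (m - 4 = (m - 6).+2)%N by lia.
  have -> : (2 ^+ (m - 6).+2 : int) = ((2 ^ (m - 6).+2)%N)%:Z by rewrite -natz natrX.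
  by rewrite natz; exact: L.
have Ea : a = j.+1 by [].
clearbody a.
case: j jm oj ea Ea => [|[|[|[|j]]]] jm oj //= _ Ea.
- by rewrite Ea expr1n subrr !mulr0 dvdz0.
- have H4 : (2 ^+ 4 %| (r`!%:R * 'C(2 + r, r)%:R * 2 ^+ 2 : int))%Z.
    rewrite (_ : 2 ^+ 4 = 2 ^+ 2 * 2 ^+ 2 :> int); last by rewrite -exprD.
    apply: dvdz_mul => //.
    have -> : (2 ^+ 2 : int) = (2 ^ 2)%N%:Z by rewrite -natz natrX.
    by rewrite -natrM natz; exact: four_dvd.
  have -> : r`!%:R * 'C(2 + r, r)%:R * (2 ^+ 2 * ((- a%:R) ^+ n * (a%:R ^+ p - 1))) =
     (r`!%:R * 'C(2 + r, r)%:R * 2 ^+ 2) * (a%:R ^+ p - 1) * (- a%:R) ^+ n :> int by ring.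
  apply: dvdz_mulr; rewrite (_ : m = 4 + (m - 4))%N; last by lia.
  by rewrite exprD; apply: dvdz_mul.
- have H4 : (2 ^+ 4 %| (r`!%:R * 'C(j.+4 + r, r)%:R * 2 ^+ j.+4 : int))%Z.
    by apply: dvdz_mull; apply: dvdz_exp2l.
  have -> : r`!%:R * 'C(j.+4 + r, r)%:R * (2 ^+ j.+4 * ((- a%:R) ^+ n * (a%:R ^+ p - 1))) =
     (r`!%:R * 'C(j.+4 + r, r)%:R * 2 ^+ j.+4) * (a%:R ^+ p - 1) * (- a%:R) ^+ n :> int by ring.
  apply: dvdz_mulr; rewrite (_ : m = 4 + (m - 4))%N; last by lia.
  by rewrite exprD; apply: dvdz_mul.
Qed.


End MN7.
Import MN7.


Import Order.TTheory GRing.Theory Num.Theory.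

Theorem theorem4p7 (r m n : nat) :
  (2 <= r)%N -> (7 <= m)%N -> (m - 1 <= n)%N ->
  rfubini (n + 2 ^ (m - 6)) r = rfubini n r %[mod 2 ^ m].
Proof.
move=> r2 m7 nm; set p := 2 ^ (m - 6).
have r0 : 0 < r by apply: leq_trans r2.
apply/eqP; rewrite -eqz_nat -!modz_nat eqz_mod_dvd -!natz natrX.
have H1 := F_V (n + p) m r0; have H0 := F_V n m r0.
have ey : (r%:R - r.+1%:R = -1 :> int)%R by rewrite -natr1; ring.
have -> : ((rfubini (n + p) r)%:R - (rfubini n r)%:R =
   ((rfubini (n + p) r)%:R - r`!%:R * V (n + p) m r r%:R) - ((rfubini n r)%:R - r`!%:R * V n m r r%:R)
   + (-1) ^+ r.+1 * \sum_(j < m) r`!%:R * ('C(j + r, r)%:R * h (n + p) (-1) j - 'C(j + r, r)%:R * h n (-1) j)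
   :> int)%R.
  rewrite /V ey -mulr_sumr sumrB; ring.
apply: rpredD; first by apply: rpredB.
by apply: dvdz_mull; apply: rpred_sum => j _; apply: term_dvd.
Qed.
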